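(* Let $\Gamma=((V,E),m)$ be an even Artin–Tits system whose underlying graph $(V,E)$ is a finite tree. Then $K_\Gamma$ is a finitely generated free group.
   Context: An Artin–Tits system $\Gamma=((V,E),m)$ consists of a simplicial graph $(V,E)$ and a labelling $m\colon E\to\{2,3,\dots\}$; it is even if all labels are even. $G_\Gamma=\langle V \mid \mathrm{prod}(u,v,m(\{u,v\}))=\mathrm{prod}(v,u,m(\{u,v\}))\ \forall \{u,v\}\in E\rangle$, where $\mathrm{prod}(u,v,n)$ is the prefix of length $n$ of $uvuv\cdots$. $K_\Gamma$ is the kernel of the homomorphism $G_\Gamma\to\mathbb{Z}$ sending every $v\in V$ to $1$. *)

(* Defs.v *)
From mathcomp Require Import all_boot all_algebra.
Set Implicit Arguments.
Unset Strict Implicit.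
Unset Printing Implicit Defensive.

(* A letter over an alphabet X: (x, false) is x, (x, true) is x^-1. *)
Definition word (X : Type) := seq (X * bool).

Definition inv_letter (X : Type) (a : X * bool) : X * bool := (a.1, ~~ a.2).
Definition inv_word (X : Type) (w : word X) : word X := rev (map (@inv_letter X) w).

Definition prodw (X : Type) (u v : X) (n : nat) : word X :=
  mkseq (fun i => if odd i then (v, false) else (u, false)) n.

Definition simple_graph (V : finType) (e : rel V) : Prop :=
  (forall x y, e x y = e y x) /\ (forall x, ~~ e x x).

Definition is_tree (V : finType) (e : rel V) : Prop :=
  [/\ simple_graph e, 0 < #|V|, (forall x y, connect e x y) &
      (forall c : seq V, uniq c -> 3 <= size c -> ~~ cycle e c)].

Definition artin_labels (V : finType) (e : rel V) (m : V -> V -> nat) : Prop :=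
  forall u v, e u v -> m u v = m v u /\ 2 <= m u v.

Definition even_labels (V : finType) (e : rel V) (m : V -> V -> nat) : Prop :=
  forall u v, e u v -> ~~ odd (m u v).

(* Equality in G_Gamma: the congruence on words generated by free cancellation
   and the Artin relations prod(u,v,m) = prod(v,u,m) for edges {u,v}. *)
Inductive artin_eq (V : finType) (e : rel V) (m : V -> V -> nat) :
    word V -> word V -> Prop :=
  | ae_refl w : artin_eq e m w w
  | ae_sym w1 w2 : artin_eq e m w1 w2 -> artin_eq e m w2 w1
  | ae_trans w1 w2 w3 :
      artin_eq e m w1 w2 -> artin_eq e m w2 w3 -> artin_eq e m w1 w3
  | ae_cancel (p q : word V) (a : V * bool) :
      artin_eq e m (p ++ [:: a; inv_letter a] ++ q) (p ++ q)
  | ae_rel (p q : word V) (u v : V) :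
      e u v -> artin_eq e m (p ++ prodw u v (m u v) ++ q)
                            (p ++ prodw v u (m u v) ++ q).

(* Image of a word under the homomorphism G_Gamma -> Z sending each generator to 1. *)
Definition expsum (X : Type) (w : word X) : int :=
  \sum_(a <- w) (if a.2 then (-1)%R else 1%R).

(* Freely reduced words (= elements of the free group on X). *)
Definition reduced (X : eqType) (w : word X) : bool :=
  ~~ has (fun p : (X * bool) * (X * bool) => p.2 == inv_letter p.1)
         (zip w (behead w)).

Definition subst_word (V : Type) (n : nat) (ws : 'I_n -> word V)
    (u : word 'I_n) : word V :=
  flatten (map (fun a => if a.2 then inv_word (ws a.1) else ws a.1) u).

(* K_Gamma is a finitely generated free group: there are n and elements
   ws i of K_Gamma such that the induced homomorphism F_n -> G_Gamma is
   injective (trivial kernel on reduced words) with image exactly K_Gamma. *)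
Definition K_fg_free (V : finType) (e : rel V) (m : V -> V -> nat) : Prop :=
  exists (n : nat) (ws : 'I_n -> word V),
    [/\ (forall i, expsum (ws i) = 0%R),
        (forall u : word 'I_n, reduced u ->
            artin_eq e m (subst_word ws u) [::] -> u = [::]) &
        (forall w : word V, expsum w = 0%R ->
            exists u : word 'I_n, artin_eq e m w (subst_word ws u))].

(* Main.v *)
Require Import Defs.
From mathcomp Require Import all_boot all_algebra zify.
Set Implicit Arguments.
Unset Strict Implicit.
Unset Printing Implicit Defensive.
Import GRing.Theory Num.Theory.

Section Free.
Variable I : eqType.
Implicit Types (a b : I * bool) (w s t x y p q : word I).

Lemma inv_letterK a : inv_letter (inv_letter a) = a.
Proof. by case: a => x b; rewrite /inv_letter /= negbK. Qed.

Lemma inv_word_cat x y : inv_word (x ++ y) = inv_word y ++ inv_word x.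
Proof. by rewrite /inv_word map_cat rev_cat. Qed.

Lemma inv_wordK x : inv_word (inv_word x) = x.
Proof. by rewrite /inv_word map_rev revK -map_comp map_id_in // => a _; rewrite /= inv_letterK. Qed.

Lemma inv_word_cons a x : inv_word (a :: x) = inv_word x ++ [:: inv_letter a].
Proof. by rewrite -cat1s inv_word_cat. Qed.

Definition cc a s : word I :=
  if s is b :: s' then (if b == inv_letter a then s' else a :: s) else [:: a].
Definition red w := foldr cc [::] w.

Fixpoint rd w : bool := match w with
 | a :: ((b :: _) as s) => (b != inv_letter a) && rd s
 | _ => true end.

Lemma rd_cc a s : rd s -> rd (cc a s).
Proof.
case: s => [|b s] //= H.
case: ifP => [_|/negbT nb] /=.
  by case: s H => [|c s] //= /andP[].
by rewrite nb H.
Qed.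

Lemma rd_foldr s x : rd s -> rd (foldr cc s x).
Proof. by move=> H; elim: x => //= a x IH; apply: rd_cc. Qed.

Lemma rd_red w : rd (red w). Proof. exact: rd_foldr. Qed.

Lemma cc_inv a s : rd s -> cc a (cc (inv_letter a) s) = s.
Proof.
case: s => [|b s] /=; first by rewrite eqxx.
rewrite inv_letterK; case: eqP => [-> | nb] /= H.
  case: s H => [|c s] //= /andP[nc _].
  by rewrite (negbTE nc).
by rewrite eqxx.
Qed.

Lemma foldr_cc s t a : rd s -> rd t ->
  foldr cc s (cc a t) = cc a (foldr cc s t).
Proof.
move=> Hs Ht; case: t Ht => [|b t] //= Ht.
case: eqP => [-> | _] //=.
by rewrite cc_inv // rd_foldr.
Qed.

Lemma foldr_red s x : rd s -> foldr cc s x = foldr cc s (red x).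
Proof.
move=> Hs; elim: x => //= a x IH.
by rewrite foldr_cc ?rd_red // IH.
Qed.

Lemma red_rd w : rd w -> red w = w.
Proof.
elim: w => //= a w IH.
case: w IH => [|b w] //= IH /andP[nb H].
by rewrite IH //= (negbTE nb).
Qed.

Lemma red_red w : red (red w) = red w.
Proof. exact: red_rd (rd_red w). Qed.

Lemma red_cat x y : red (x ++ y) = foldr cc (red y) x.
Proof. by rewrite /red foldr_cat. Qed.

Lemma red_catr x y : red (x ++ y) = red (x ++ red y).
Proof. by rewrite !red_cat (red_rd (rd_red y)). Qed.

Lemma red_catl x y : red (x ++ y) = red (red x ++ y).
Proof. by rewrite !red_cat [in RHS]foldr_red ?rd_red // (red_rd (rd_red x)) -foldr_red ?rd_red. Qed.

Lemma red_cong x y p q : red x = red y -> red (p ++ x ++ q) = red (p ++ y ++ q).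
Proof.
move=> H; rewrite red_catr [in RHS]red_catr.
by rewrite (red_catl x q) (red_catl y q) H.
Qed.

Lemma red_cancel x : red (x ++ inv_word x) = [::].
Proof.
elim: x => //= a x IH.
rewrite inv_word_cons catA red_catl IH /=.
by rewrite eqxx.
Qed.

Lemma red_cancel' x : red (inv_word x ++ x) = [::].
Proof. by rewrite -{2}(inv_wordK x) red_cancel. Qed.

Lemma red_del x p q : red x = [::] -> red (p ++ x ++ q) = red (p ++ q).
Proof. by move=> H; rewrite (red_cong p q (y := [::])) ?H. Qed.

Lemma reduced_rd w : reduced w -> rd w.
Proof.
rewrite /reduced; elim: w => //= a w IH.
case: w IH => [|b w] //= IH.
rewrite negb_or => /andP[nb H].
by rewrite nb IH.
Qed.

End Free.

Section Graph.
Variable V : finType.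
Variable e : rel V.
Variable r : V.
Hypothesis Hsym : forall x y, e x y = e y x.
Hypothesis Hirr : forall x, ~~ e x x.
Hypothesis Hconn : forall x y, connect e x y.
Hypothesis Hacyc : forall c : seq V, uniq c -> 3 <= size c -> ~~ cycle e c.

Definition dpred (v : V) (n : nat) : bool :=
  [exists t : n.-tuple V, path e r t && (last r t == v)].

Lemma dex v : exists n, dpred v n.
Proof.
have /connectP[p Hp Hl] := Hconn r v.
exists (size p); apply/existsP; exists (in_tuple p) => /=.
by rewrite Hp -Hl eqxx.
Qed.

Definition d v := ex_minn (dex v).

Lemma dP v : dpred v (d v).
Proof. by rewrite /d; case: ex_minnP. Qed.

Lemma d_min v k : dpred v k -> d v <= k.
Proof. by rewrite /d; case: ex_minnP => n _ H /H. Qed.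

Lemma d_r : d r = 0.
Proof.
apply/eqP; rewrite -leqn0; apply: d_min.
by apply/existsP; exists [tuple]; rewrite /= eqxx.
Qed.

Lemma dpar_ex v : v != r -> exists u, e u v && (d u < d v).
Proof.
move=> Hv; have /existsP[t /andP[Hp /eqP Hl]] := dP v.
have Hs := size_tuple t.
move: Hp Hl Hs; case: (tval t) / lastP => [|q x] /=.
  by move=> _ Hl; rewrite -Hl eqxx in Hv.
rewrite rcons_path last_rcons size_rcons => /andP[Hq He] Ex Hs.
rewrite Ex in He.
exists (last r q); rewrite He /=.
rewrite -Hs ltnS; apply: d_min; apply/existsP; exists (in_tuple q) => /=.
by rewrite Hq eqxx.
Qed.

Definition par v := if [pick u | e u v && (d u < d v)] is Some u then u else r.

Lemma par_spec v : v != r -> e (par v) v && (d (par v) < d v).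
Proof.
move=> Hv; rewrite /par; case: pickP => [u //|H].
by have [u Hu] := dpar_ex Hv; rewrite H in Hu.
Qed.

Lemma par_r : par r = r.
Proof.
rewrite /par; case: pickP => [u /andP[_]|//].
by rewrite d_r.
Qed.

Lemma par_le v : d (par v) <= d v.
Proof.
case: (eqVneq v r) => [->|Hv]; first by rewrite par_r.
by have /andP[_ /ltnW] := par_spec Hv.
Qed.

Definition Hp x mid y := [&& uniq (x :: rcons mid y), path e x (rcons mid y),
   head y mid != par x & last x mid != par y].

Lemma Hp_rev x mid y : Hp x mid y -> Hp y (rev mid) x.
Proof.
case/and4P => H1 H2 H3 H4; apply/and4P; split.
- by rewrite -rev_cons -rev_rcons rcons_cons rev_uniq.
- have := rev_path e x (rcons mid y).
  rewrite last_rcons belast_rcons rev_cons => ->.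
  by rewrite (@eq_path _ _ e) // => a b /=; rewrite Hsym.
- by move: H4; clear; case: mid / lastP => [|s z] //; rewrite rev_rcons last_rcons.
- by move: H3; clear; case: mid => [|z s] //; rewrite rev_cons last_rcons.
Qed.

Lemma Hp_step x mid y : x != r -> Hp x mid y -> Hp (par x) (x :: mid) y.
Proof.
move=> Hx /and4P[H1 H2 H3 H4].
have /andP[Hzx Hd] := par_spec Hx.
set z := par x in Hzx Hd *.
have [Hin | Hnin] := boolP (z \in rcons mid y).
  exfalso.
  have H3' : head y (rcons mid y) != z by move: H3; clear; case: mid.
  move: H1 H2 H3'; case/splitPr: Hin => A B H1 H2 H3'.
  case: A H1 H2 H3' => [|a A] H1 H2 H3'; first by rewrite /= eqxx in H3'.
  have U : uniq (x :: rcons (a :: A) z).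
    by move: H1; rewrite -cat_rcons -cat_cons cat_uniq => /andP[].
  have Sz : 3 <= size (x :: rcons (a :: A) z) by rewrite /= size_rcons.
  have /negP := Hacyc U Sz; apply.
  rewrite /cycle rcons_path last_rcons Hzx andbT.
  by move: H2; rewrite -cat_rcons cat_path => /andP[].
apply/and4P; split => //=.
- move: H1 => /= /andP[-> ->]; rewrite in_cons negb_or Hnin !andbT.
  by apply/eqP => Ezx; rewrite Ezx ltnn in Hd.
- by apply/andP; split.
- apply/negP => /eqP E; have := par_le z; rewrite -E; lia.
Qed.

Lemma no_bad n0 x mid y : d x + d y < n0 -> Hp x mid y -> False.
Proof.
elim: n0 x mid y => [|n0 IH] x mid y //= Hn H.
case: (eqVneq x r) => [Ex|Hx].
  have Hy : y != r.
    move: H => /and4P[H1 _ _ _]; move: H1 => /= /andP[H1 _].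
    apply/eqP => Ey; move: H1; rewrite Ex Ey mem_rcons in_cons eqxx //.
  have /andP[_ Hd] := par_spec Hy.
  apply: (IH _ _ _ _ (Hp_step Hy (Hp_rev H))); lia.
have /andP[_ Hd] := par_spec Hx.
apply: (IH _ _ _ _ (Hp_step Hx H)); lia.
Qed.

Lemma edge_par u v : e u v -> u = par v \/ v = par u.
Proof.
move=> Huv.
case: (eqVneq u (par v)) => [->|H1]; first by left.
case: (eqVneq v (par u)) => [->|H2]; first by right.
exfalso; apply: (@no_bad (d u + d v).+1 u [::] v) => //.
apply/and4P; split => //=.
- rewrite in_cons orbF andbT; apply/eqP => E; rewrite E in Huv.
  by move: (Hirr v); rewrite Huv.
- by rewrite Huv.
Qed.

End Graph.

Open Scope ring_scope.

Definition FL (I : Type) (F : nat -> word I) (l : seq nat) : word I := flatten (map F l).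

Section Rho.
Variable I : eqType.
Variable P : int -> word I.
Variable K : nat.
Variable base : nat -> word I.
Hypothesis oK : odd K.

Definition T1 (f : int -> word I) (s : int) (i : nat) :=
  if odd i then P (s + i%:Z) else f (s + i%:Z).
Definition T2 (f : int -> word I) (s : int) (i : nat) :=
  if odd i then f (s + i%:Z) else P (s + i%:Z).

Definition T1w (W : seq (word I)) s i := if odd i then P (s + i%:Z) else nth [::] W i.
Definition T2w (W : seq (word I)) s i := if odd i then nth [::] W i else P (s + i%:Z).
Definition up_new W s :=
  red (inv_word (FL (T2w W s) (iota 0 K)) ++ FL (T1w W s) (iota 0 K.+1)).
Fixpoint Wup (n : nat) : seq (word I) :=
  if n is n'.+1 then rcons (behead (Wup n')) (up_new (Wup n') (Posz n'))
  else mkseq base K.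
Definition T1d (W : seq (word I)) s i := if odd i then P (s + i%:Z) else nth [::] W i.-1.
Definition T2d (W : seq (word I)) s i := if odd i then nth [::] W i.-1 else P (s + i%:Z).
Definition dn_new W s :=
  red (FL (T2d W s) (iota 0 K.+1) ++ inv_word (FL (T1d W s) (iota 1 K))).
Fixpoint Wdn (n : nat) : seq (word I) :=
  if n is n'.+1 then dn_new (Wdn n') (Negz n') :: take K.-1 (Wdn n')
  else mkseq base K.
Definition Rho (t : int) : word I :=
  match t with Posz n => nth [::] (Wup n) 0 | Negz n => nth [::] (Wdn n.+1) 0 end.

Lemma K_gt0 : (0 < K)%N.
Proof. by case: K oK. Qed.

Lemma size_Wup n : size (Wup n) = K.
Proof.
elim: n => [|n IH] /=; first by rewrite size_mkseq.
by rewrite size_rcons size_behead IH prednK // K_gt0.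
Qed.

Lemma size_Wdn n : size (Wdn n) = K.
Proof.
elim: n => [|n IH] /=; first by rewrite size_mkseq.
rewrite size_take IH; have := K_gt0; case: (K) => //= k _.
by rewrite ltnSn.
Qed.

Lemma WU i n : (i < K)%N -> nth [::] (Wup n) i = nth [::] (Wup (n + i)) 0.
Proof.
elim: i n => [|i IH] n Hi; first by rewrite addn0.
rewrite addnS -addSn -IH; last by apply: ltnW.
rewrite /= nth_rcons size_behead size_Wup.
have -> : (i < K.-1)%N by move: Hi; case: (K).
by rewrite nth_behead.
Qed.

Lemma RhoP n i : (i < K)%N -> Rho (Posz n + i%:Z) = nth [::] (Wup n) i.
Proof. by move=> Hi; rewrite -PoszD /= (WU n Hi). Qed.

Lemma WD n i : (i < K)%N -> nth [::] (Wdn n) i = Rho (i%:Z - n%:Z).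
Proof.
elim: n i => [|n IH] i Hi.
  by rewrite subr0 /= -[in RHS](add0n i) -WU.
case: i Hi => [|i] Hi /=.
  by rewrite subn0.

rewrite nth_take; last by move: Hi; case: (K) => //.
rewrite IH; last by apply: ltnW.
congr Rho; lia.
Qed.

Lemma RhoB j : (j < K)%N -> Rho (Posz j) = base j.
Proof. by move=> Hj; rewrite /= -[j]add0n -WU //= nth_mkseq. Qed.

Lemma RhoU n : Rho (Posz n + K%:Z) =
  red (inv_word (FL (T2 Rho (Posz n)) (iota 0 K)) ++ FL (T1 Rho (Posz n)) (iota 0 K.+1)).
Proof.
have Hk := K_gt0.
have -> : Posz n + K%:Z = Posz n.+1 + (K.-1)%:Z by rewrite -!PoszD addSnnS prednK.
rewrite RhoP ?prednK // [Wup n.+1]/= nth_rcons size_behead size_Wup ltnn eqxx /up_new.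
congr red; congr (_ ++ _).
  congr inv_word; rewrite /FL; congr flatten. apply/eq_in_map => i.
  rewrite mem_iota add0n => /andP[_ Hi].
  by rewrite /T2w /T2 RhoP.
rewrite /FL; congr flatten; apply/eq_in_map => i.
rewrite mem_iota add0n => /andP[_ Hi].
rewrite /T1w /T1; case: ifP => // oi; rewrite RhoP //.
rewrite ltnS leq_eqVlt in Hi; case/orP: Hi => // /eqP Hi.
by rewrite Hi oK in oi.
Qed.

Lemma RhoD n : Rho (Negz n) =
  red (FL (T2 Rho (Negz n)) (iota 0 K.+1) ++ inv_word (FL (T1 Rho (Negz n)) (iota 1 K))).
Proof.
rewrite /= /dn_new.
congr red; congr (_ ++ _).
  rewrite /FL; congr flatten; apply/eq_in_map => i.
  rewrite mem_iota add0n => /andP[_ Hi].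
  rewrite /T2d /T2; case: ifP => // oi.
  case: i oi Hi => [|i] // oi Hi /=.
  rewrite WD //; congr Rho; rewrite NegzE; lia.
congr inv_word; rewrite /FL; congr flatten; apply/eq_in_map => i.
rewrite mem_iota => /andP[H1 Hi].
rewrite /T1d /T1; case: ifP => // oi.
case: i oi H1 Hi => [|i] // oi _ Hi /=.
rewrite WD; last by rewrite -ltnS -[K.+1]add1n.
congr Rho; rewrite NegzE; lia.
Qed.

Lemma FL_cat (F : nat -> word I) l1 l2 : FL F (l1 ++ l2) = FL F l1 ++ FL F l2.
Proof. by rewrite /FL map_cat flatten_cat. Qed.

Lemma RhoRel s : red (FL (T1 Rho s) (iota 0 K.+1)) = red (FL (T2 Rho s) (iota 0 K.+1)).
Proof.
case: s => n.
  have E : iota 0 K.+1 = iota 0 K ++ [:: K] by rewrite -addn1 iotaD.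
  rewrite [in RHS]E FL_cat.
  have -> : FL (T2 Rho n) [:: K] = Rho (Posz n + K%:Z) by rewrite /FL /= /T2 oK cats0.
  rewrite RhoU -red_catr catA red_catl red_cancel.
  by [].
have -> : FL (T1 Rho (Negz n)) (iota 0 K.+1) =
   Rho (Negz n) ++ FL (T1 Rho (Negz n)) (iota 1 K).
  rewrite /FL /=; congr (_ ++ _); rewrite /T1 /=.
  by rewrite subn0.
rewrite RhoD -red_catl -catA red_catr red_cancel' cats0.
by [].
Qed.

End Rho.

Section G.
Variable V : finType.
Variable e : rel V.
Variable m : V -> V -> nat.
Local Notation "x ~ y" := (artin_eq e m x y) (at level 70).

Lemma ae_congr x y p q : x ~ y -> p ++ x ++ q ~ p ++ y ++ q.
Proof.
elim=> {x y}.
- by move=> w; apply: ae_refl.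
- by move=> w1 w2 _ H; apply: ae_sym.
- by move=> w1 w2 w3 _ H1 _ H2; apply: ae_trans H2.
- move=> p0 q0 a.
  have := ae_cancel e m (p ++ p0) (q0 ++ q) a.
  by rewrite -!catA /=.
- move=> p0 q0 u v H.
  have := ae_rel m (p ++ p0) (q0 ++ q) H.
  by rewrite -!catA.
Qed.

Lemma ae_catl x y p : x ~ y -> p ++ x ~ p ++ y.
Proof. by move=> H; have := ae_congr p [::] H; rewrite !cats0. Qed.
Lemma ae_catr x y q : x ~ y -> x ++ q ~ y ++ q.
Proof. by move=> H; have := ae_congr [::] q H. Qed.
Lemma ae_cat x y x' y' : x ~ x' -> y ~ y' -> x ++ y ~ x' ++ y'.
Proof. by move=> H1 H2; apply: ae_trans (ae_catr _ H1) (ae_catl _ H2). Qed.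

Lemma ae_inv_r x : x ++ inv_word x ~ [::].
Proof.
elim: x => [|a x IH] /=; first by apply: ae_refl.
rewrite inv_word_cons.
apply: ae_trans (_ : [:: a] ++ [:: inv_letter a] ~ _).
  have := ae_congr [:: a] [:: inv_letter a] IH.
  by rewrite /= -catA.
by have := ae_cancel e m [::] [::] a.
Qed.

Lemma ae_inv_l x : inv_word x ++ x ~ [::].
Proof. by have := ae_inv_r (inv_word x); rewrite inv_wordK. Qed.

Lemma ae_inv x y : x ~ y -> inv_word x ~ inv_word y.
Proof.
move=> H.
apply: ae_trans (_ : inv_word x ++ (y ++ inv_word y) ~ _).
  by have := ae_catl (inv_word x) (ae_sym (ae_inv_r y)); rewrite cats0.
apply: ae_trans (_ : inv_word x ++ (x ++ inv_word y) ~ _).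
  by apply: ae_catl; apply: ae_catr; apply: ae_sym.
by rewrite catA; have := ae_catr (inv_word y) (ae_inv_l x).
Qed.

Lemma ae_symm x y : x ~ y -> y ~ x. Proof. exact: ae_sym. Qed.
Lemma aeT y x z : x ~ y -> y ~ z -> x ~ z. Proof. exact: ae_trans. Qed.

Lemma ae_FL (F G : nat -> word V) l : (forall i, i \in l -> F i ~ G i) -> FL F l ~ FL G l.
Proof.
elim: l => [|i l IH] H /=; first by apply: ae_refl.
apply: ae_cat; first by apply: H; rewrite inE eqxx.
by apply: IH => j Hj; apply: H; rewrite inE Hj orbT.
Qed.

Variable r : V.

Definition pw (k : int) : word V :=
  match k with Posz n => nseq n (r, false) | Negz n => nseq n.+1 (r, true) end.

Lemma pw_succ k : pw (k + 1) ~ pw k ++ [:: (r, false)].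
Proof.
case: k => n.
  have -> : Posz n + 1 = Posz (n + 1)%N by lia.
  rewrite /= nseqD; exact: ae_refl.
case: n => [|n].
  have -> : Negz 0 + 1 = Posz 0 by [].
  by apply: ae_symm; have := ae_cancel e m [::] [::] (r, true).
have -> : Negz n.+1 + 1 = Negz n by rewrite !NegzE; lia.
have E : pw (Negz n.+1) ++ [:: (r, false)] =
   nseq n.+1 (r, true) ++ [:: (r, true); inv_letter (r, true)] ++ [::].
  have -> : pw (Negz n.+1) = nseq (n.+1 + 1) (r, true) by rewrite addn1.
  by rewrite nseqD -catA.
rewrite E; apply: ae_symm.
apply: ae_trans (ae_cancel e m (nseq n.+1 (r, true)) [::] (r, true)) _.
rewrite cats0; exact: ae_refl.
Qed.

Lemma pw_pred k : pw k ++ [:: (r, true)] ~ pw (k - 1).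
Proof.
have H := pw_succ (k - 1); rewrite subrK in H.
apply: (aeT (y := (pw (k - 1) ++ [:: (r, false)]) ++ [:: (r, true)])).
  exact: ae_catr.
apply: (aeT (y := pw (k - 1) ++ [::])); last by rewrite cats0; exact: ae_refl.
rewrite -catA; exact: ae_cancel e m (pw (k - 1)) [::] (r, false).
Qed.

Lemma pw_add a b : pw a ++ pw b ~ pw (a + b).
Proof.
case: b => n.
  elim: n => [|n IH].
    by rewrite /= cats0 addr0; exact: ae_refl.
  have -> : pw (Posz n.+1) = pw (Posz n) ++ [:: (r, false)].
    by change (nseq n.+1 (r, false) = nseq n (r, false) ++ [:: (r, false)]); rewrite -addn1 nseqD.
  rewrite catA; apply: ae_trans (ae_catr _ IH) _.
  have -> : a + Posz n.+1 = (a + Posz n) + 1 by lia.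
  exact: ae_symm (pw_succ _).
elim: n => [|n IH].
  have -> : a + Negz 0 = a - 1 by rewrite NegzE.
  exact: pw_pred.
have -> : pw (Negz n.+1) = pw (Negz n) ++ [:: (r, true)].
  by change (nseq n.+2 (r, true) = nseq n.+1 (r, true) ++ [:: (r, true)]); rewrite -addn1 nseqD.
rewrite catA; apply: ae_trans (ae_catr _ IH) _.
have -> : a + Negz n.+1 = (a + Negz n) - 1 by rewrite !NegzE; lia.
exact: pw_pred.
Qed.

Lemma inv_pw k : inv_word (pw k) = pw (- k).
Proof.
case: k => n.
  case: n => [|n] //.
  have -> : - Posz n.+1 = Negz n by rewrite NegzE.
  by rewrite /inv_word map_nseq rev_nseq.
have -> : - Negz n = Posz n.+1 by rewrite NegzE opprK.
by rewrite /inv_word map_nseq rev_nseq.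
Qed.

Definition Xw (v : V) (t : int) : word V := pw t ++ [:: (v, false); (r, true)] ++ pw (- t).

Lemma TEL (g : nat -> V) M s :
  FL (fun i => Xw (g i) (s + i%:Z)) (iota 0 M) ~
  pw s ++ [seq (g i, false) | i <- iota 0 M] ++ pw (- (s + M%:Z)).
Proof.
elim: M => [|M IH].
  rewrite /= addr0; apply: ae_symm; apply: ae_trans (pw_add _ _) _.
  by rewrite subrr; exact: ae_refl.
rewrite -addn1 iotaD FL_cat map_cat.
apply: ae_trans (ae_catr _ IH) _.
rewrite /FL /= cats0 add0n /Xw.
apply: (@ae_trans _ _ _ _ (pw s ++ [seq (g i, false) | i <- iota 0 M] ++
   (pw (- (s + M%:Z)) ++ pw (s + M%:Z)) ++ [:: (g M, false); (r, true)] ++ pw (- (s + M%:Z)))).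
  by rewrite -!catA; exact: ae_refl.
apply: (@ae_trans _ _ _ _ (pw s ++ [seq (g i, false) | i <- iota 0 M] ++
   [:: (g M, false)] ++ (pw (-1) ++ pw (- (s + M%:Z))))).
  apply: ae_catl; apply: ae_catl.
  apply: ae_trans (ae_catr _ (pw_add _ _)) _.
  rewrite addNr; exact: ae_refl.
rewrite -catA; apply: ae_catl; apply: ae_catl; apply: ae_catl.
apply: ae_trans (pw_add _ _) _.
have -> : -1 + - (s + M%:Z) = - (s + (M + 1)%N%:Z) by lia.
exact: ae_refl.
Qed.

Lemma prodwE (u v : V) M : prodw u v M = [seq ((if odd i then v else u), false) | i <- iota 0 M].
Proof. by rewrite /prodw /mkseq; apply: eq_map => i; case: odd. Qed.

Lemma Grel (u v : V) s : e u v ->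
  FL (fun i => Xw (if odd i then v else u) (s + i%:Z)) (iota 0 (m u v)) ~
  FL (fun i => Xw (if odd i then u else v) (s + i%:Z)) (iota 0 (m u v)).
Proof.
move=> Huv.
apply: aeT (TEL _ _ _) _; apply: ae_symm; apply: aeT (TEL _ _ _) _; apply: ae_symm.
rewrite -!prodwE; exact: ae_rel.
Qed.

Section Subst.
Variable n : nat.
Variable ws : 'I_n -> word V.
Local Notation S := (subst_word ws).

Lemma S_cat x y : S (x ++ y) = S x ++ S y.
Proof. by rewrite /subst_word map_cat flatten_cat. Qed.

Lemma S_inv x : S (inv_word x) = inv_word (S x).
Proof.
elim: x => [|a x IH] //.
rewrite inv_word_cons S_cat IH -[a :: x]cat1s S_cat inv_word_cat; congr (_ ++ _).
by case: a => i []; rewrite /subst_word /inv_letter /= ?cats0 ?inv_wordK.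
Qed.

Lemma S_FL (F : nat -> word 'I_n) l : S (FL F l) = FL (fun i => S (F i)) l.
Proof. by elim: l => [|i l IH] //=; rewrite S_cat IH. Qed.

Lemma S_cc a t : S (cc a t) ~ S (a :: t).
Proof.
case: t => [|b t] /=; first by exact: ae_refl.
case: eqP => [-> | _]; last by exact: ae_refl.
rewrite -[a :: inv_letter a :: t]/([:: a; inv_letter a] ++ t) S_cat.
have H : S [:: a; inv_letter a] ~ [::].
  case: a => i []; rewrite /subst_word /inv_letter /= ?cats0.
    exact: ae_inv_l.
  exact: ae_inv_r.
apply: ae_symm; exact: (ae_catr (S t) H).
Qed.

Lemma S_red w : S (red w) ~ S w.
Proof.
elim: w => [|a w IH] /=; first by exact: ae_refl.
apply: aeT (S_cc _ _) _.
rewrite -[a :: red w]cat1s -[a :: w]cat1s !S_cat; exact: ae_catl.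
Qed.

End Subst.

End G.

Section Star.
Variable V : finType.
Variable e : rel V.
Variable m : V -> V -> nat.
Variable r : V.
Variable n : nat.
Variable ws : 'I_n -> word V.
Local Notation "x ~ y" := (artin_eq e m x y) (at level 70).
Local Notation S := (subst_word ws).
Local Notation X := (Xw r).
Variables (c p : V) (K : nat) (P : int -> word 'I_n) (base : nat -> word 'I_n).
Hypothesis oK : odd K.
Hypothesis Hcp : e c p.
Hypothesis HM : m c p = K.+1.
Hypothesis HP : forall t, X p t ~ S (P t).
Hypothesis HB : forall j, (j < K)%N -> X c (Posz j) ~ S (base j).
Local Notation f := (Rho P K base).

Definition XT1 s i := X (if odd i then p else c) (s + i%:Z).
Definition XT2 s i := X (if odd i then c else p) (s + i%:Z).

Lemma S_T1 s l : (forall i, i \in l -> ~~ odd i -> X c (s + i%:Z) ~ S (f (s + i%:Z))) ->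
  FL (XT1 s) l ~ S (FL (T1 P f s) l).
Proof.
move=> H; rewrite S_FL; apply: ae_FL => i Hi.
rewrite /XT1 /T1; case: ifP => oi; first exact: HP.
by apply: H => //; rewrite oi.
Qed.

Lemma S_T2 s l : (forall i, i \in l -> odd i -> X c (s + i%:Z) ~ S (f (s + i%:Z))) ->
  FL (XT2 s) l ~ S (FL (T2 P f s) l).
Proof.
move=> H; rewrite S_FL; apply: ae_FL => i Hi.
rewrite /XT2 /T2; case: ifP => oi; last exact: HP.
exact: H.
Qed.

Lemma Grel' s : FL (XT1 s) (iota 0 K.+1) ~ FL (XT2 s) (iota 0 K.+1).
Proof. by have := Grel m r s Hcp; rewrite HM. Qed.

Lemma star_pos N j : (j < N)%N -> X c (Posz j) ~ S (f (Posz j)).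
Proof.
elim: N j => [|N IH] j //.
rewrite ltnS leq_eqVlt => /orP[/eqP -> | ]; last exact: IH.
case: (ltnP N K) => HNK.
  rewrite RhoB //; exact: HB.
have -> : Posz N = Posz (N - K)%N + K%:Z by rewrite -PoszD subnK.
set n0 := (N - K)%N.
have HN : (n0 + K = N)%N by rewrite subnK.
rewrite RhoU //.
apply: ae_symm; apply: aeT (S_red _ _ _ _) _; rewrite S_cat S_inv.
have HA : FL (XT2 n0) (iota 0 K) ~ S (FL (T2 P f n0) (iota 0 K)).
  apply: S_T2 => i; rewrite mem_iota => /andP[_ Hi] _.
  rewrite -PoszD; apply: IH; lia.
have HT : FL (XT1 n0) (iota 0 K.+1) ~ S (FL (T1 P f n0) (iota 0 K.+1)).
  apply: S_T1 => i; rewrite mem_iota => /andP[_ Hi] oi.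
  rewrite -PoszD; apply: IH.
  have : i != K by apply/negP => /eqP E; move: oi; rewrite E oK.
  lia.
apply: aeT (ae_cat (ae_inv (ae_symm HA)) (ae_symm HT)) _.
apply: aeT (ae_catl _ (Grel' n0)) _.
rewrite -addn1 iotaD FL_cat catA add0n.
apply: aeT (ae_catr _ (ae_inv_l e m _)) _.
rewrite /FL /= /XT2 oK cats0; exact: ae_refl.
Qed.

Lemma star_negk k t : - (k%:Z) <= t -> X c t ~ S (f t).
Proof.
elim: k t => [|k IH] t Ht.
  case: t Ht => [j|j] Ht; last by move: Ht; rewrite NegzE; lia.
  exact: (@star_pos j.+1).
have [Ht'|Ht'] := boolP (- (k%:Z) <= t); first exact: IH.
have -> : t = Negz k by rewrite NegzE; lia.
rewrite RhoD //.
apply: ae_symm; apply: aeT (S_red _ _ _ _) _; rewrite S_cat S_inv.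
have HA : FL (XT2 (Negz k)) (iota 0 K.+1) ~ S (FL (T2 P f (Negz k)) (iota 0 K.+1)).
  apply: S_T2 => i; rewrite mem_iota => /andP[_ Hi] oi.
  apply: IH; case: i oi Hi => [|i] // _ _; rewrite NegzE; lia.
have HT : FL (XT1 (Negz k)) (iota 1 K) ~ S (FL (T1 P f (Negz k)) (iota 1 K)).
  apply: S_T1 => i; rewrite mem_iota => /andP[Hi _] oi.
  apply: IH; rewrite NegzE; lia.
apply: aeT (ae_cat (ae_symm HA) (ae_inv (ae_symm HT))) _.
apply: aeT (ae_catr _ (ae_symm (Grel' _))) _.
have -> : FL (XT1 (Negz k)) (iota 0 K.+1) = X c (Negz k) ++ FL (XT1 (Negz k)) (iota 1 K).
  have -> : FL (XT1 (Negz k)) (iota 0 K.+1) = XT1 (Negz k) 0 ++ FL (XT1 (Negz k)) (iota 1 K) by [].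
  by rewrite /XT1 (_ : Negz k + 0%:Z = Negz k) //; lia.
rewrite -catA.
have := ae_catl (X c (Negz k)) (ae_inv_r e m (FL (XT1 (Negz k)) (iota 1 K))).
by rewrite cats0.
Qed.

Lemma star t : X c t ~ S (f t).
Proof. apply: (@star_negk `|t|%N); lia. Qed.

End Star.

Section Main.
Variable V : finType.
Variable e : rel V.
Variable m : V -> V -> nat.
Variable r : V.
Hypothesis Hsym : forall x y, e x y = e y x.
Hypothesis Hirr : forall x, ~~ e x x.
Hypothesis Hconn : forall x y, connect e x y.
Hypothesis Hacyc : forall c : seq V, uniq c -> (3 <= size c)%N -> ~~ cycle e c.
Hypothesis Hlab : artin_labels e m.
Hypothesis Heven : even_labels e m.
Local Notation "x ~ y" := (artin_eq e m x y) (at level 70).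
Local Notation par := (par r Hconn).
Local Notation d := (d r Hconn).

Definition Mx := (\max_(v : V) m v (par v))%N.
Definition Bpred (x : V * 'I_Mx.+1) : bool := (x.1 != r) && (x.2 < (m x.1 (par x.1)).-1)%N.
Definition B := {x : V * 'I_Mx.+1 | Bpred x}.
Definition nB := #|{: B}|.
Definition ws (i : 'I_nB) : word V :=
  Xw r (val (enum_val i)).1 (Posz (val (enum_val i)).2).
Local Notation S := (subst_word ws).

Definition bl (c : V) (j : nat) : word 'I_nB :=
  if (insub (c, inord j) : option B) is Some b then [:: (enum_rank b, false)] else [::].

Fixpoint rhoN (N : nat) (c : V) : int -> word 'I_nB :=
  if N is N'.+1 then
    (if c == r then fun _ => [::] else Rho (rhoN N' (par c)) (m c (par c)).-1 (bl c))
  else fun _ => [::].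

Definition Kf := (\max_(v : V) d v).+1%N.
Definition rho c := rhoN Kf c.

Lemma rhoN_stab N x : (d x < N)%N -> rhoN N x = rhoN N.+1 x.
Proof.
elim: N x => [|N IH] x // Hx.
rewrite [LHS]/= [RHS]/=; case: eqP => // /eqP Hxr.
have /andP[_ Hd] := par_spec Hconn Hxr.
rewrite IH //; lia.
Qed.

Lemma rho_r : rho r = fun _ => [::].
Proof. by rewrite /rho /Kf /= eqxx. Qed.

Lemma rho_c c : c != r -> rho c = Rho (rho (par c)) (m c (par c)).-1 (bl c).
Proof.
move=> Hc; rewrite /rho /Kf /= (negbTE Hc).
have /andP[_ Hd] := par_spec Hconn Hc.
have Hm : (d c <= \max_(v : V) d v)%N by apply: (leq_bigmax c).
by rewrite rhoN_stab //; lia.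
Qed.

Lemma par_edge c : c != r -> e c (par c).
Proof. by move=> Hc; have /andP[H _] := par_spec Hconn Hc; rewrite Hsym. Qed.

Lemma mK c : c != r -> m c (par c) = (m c (par c)).-1.+1 /\ odd (m c (par c)).-1.
Proof.
move=> Hc; have He := par_edge Hc.
have [_ H2] := Hlab He; have Ho := Heven He.
have E : m c (par c) = (m c (par c)).-1.+1 by rewrite prednK //; lia.
by split => //; move: Ho; rewrite {1}E /=; rewrite negbK.
Qed.

Fixpoint phw (w : word V) (s : int) : word 'I_nB :=
  match w with
  | [::] => [::]
  | a :: w' => (if a.2 then inv_word (rho a.1 (s - 1)) else rho a.1 s) ++
               phw w' (if a.2 then s - 1 else s + 1)
  end.

Lemma expsum_cons (a : V * bool) w :
  expsum (a :: w) = (if a.2 then -1 else 1) + expsum w.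
Proof. by rewrite /expsum big_cons. Qed.

Lemma expsum_cat (x y : word V) : expsum (x ++ y) = expsum x + expsum y.
Proof. by rewrite /expsum big_cat. Qed.

Lemma phw_cat x y s : phw (x ++ y) s = phw x s ++ phw y (s + expsum x).
Proof.
elim: x s => [|a x IH] s /=; first by rewrite /expsum big_nil addr0.
rewrite IH catA expsum_cons; congr (_ ++ phw y _).
by case: a.2; lia.
Qed.

Lemma expsum_pos (g : nat -> V) l : expsum [seq (g i, false) | i <- l] = (size l)%:Z.
Proof. elim: l => [|i l IH] /=; first by rewrite /expsum big_nil. rewrite expsum_cons IH /=; lia. Qed.

Lemma phw_pos (g : nat -> V) M t :
  phw [seq (g i, false) | i <- iota 0 M] t = FL (fun i => rho (g i) (t + i%:Z)) (iota 0 M).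
Proof.
elim: M g t => [|M IH] g t //.
rewrite [iota 0 M.+1]/= (iotaDl 1 0 M) map_cons.
have -> : [seq (g i, false) | i <- [seq (1 + i)%N | i <- iota 0 M]] =
   [seq (g (1 + i)%N, false) | i <- iota 0 M] by rewrite -map_comp.
rewrite /= (IH (fun i => g (1 + i)%N)) /FL /= -map_comp addr0; congr (_ ++ flatten _).
apply: eq_map => i /=; congr rho; lia.
Qed.

Lemma relpar c t : c != r ->
  red (FL (fun i => rho (if odd i then par c else c) (t + i%:Z)) (iota 0 (m c (par c)))) =
  red (FL (fun i => rho (if odd i then c else par c) (t + i%:Z)) (iota 0 (m c (par c)))).
Proof.
move=> Hc; have [E oK] := mK Hc.
set K := (m c (par c)).-1 in E oK *.
rewrite E.
have E1 : FL (fun i => rho (if odd i then par c else c) (t + i%:Z)) (iota 0 K.+1) =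
   FL (T1 (rho (par c)) (rho c) t) (iota 0 K.+1).
  by rewrite /FL /T1; congr flatten; apply: eq_map => i; case: odd.
have E2 : FL (fun i => rho (if odd i then c else par c) (t + i%:Z)) (iota 0 K.+1) =
   FL (T2 (rho (par c)) (rho c) t) (iota 0 K.+1).
  by rewrite /FL /T2; congr flatten; apply: eq_map => i; case: odd.
rewrite E1 E2 (rho_c Hc).
exact: RhoRel.
Qed.

Lemma phw_ae w1 w2 : w1 ~ w2 -> forall s, red (phw w1 s) = red (phw w2 s).
Proof.
elim=> {w1 w2}.
- by [].
- by move=> w1 w2 _ H s; rewrite H.
- by move=> w1 w2 w3 _ H1 _ H2 s; rewrite H1 H2.
- move=> p q [v b] s.
  have E0 : expsum [:: (v, b); inv_letter (v, b)] = 0.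
    by case: b; rewrite /expsum !big_cons big_nil /=; lia.
  rewrite !phw_cat E0 addr0.
  case: b E0 => _ /=; rewrite ?cats0 ?addrK; apply: red_del.
    exact: red_cancel'.
  exact: red_cancel.
- move=> p q u v Huv s.
  rewrite !phw_cat !prodwE !expsum_pos; apply: red_cong.
  rewrite !phw_pos.
  have [Hm _] := Hlab Huv.
  case: (edge_par r Hsym Hirr Hconn Hacyc Huv) => Hp.
    have Hv : v != r.
      apply/eqP => Ev; move: Huv; rewrite Hp Ev par_r.
      by move: (Hirr r) => /negbTE ->.
    rewrite Hm Hp; exact: (esym (relpar _ Hv)).
  have Hu : u != r.
    apply/eqP => Eu; move: Huv; rewrite Hp Eu par_r.
    by move: (Hirr r) => /negbTE ->.
  rewrite Hp; exact: (relpar _ Hu).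
Qed.

Local Notation pw := (pw r).
Local Notation X := (Xw r).

Lemma bl_basis c j (Hc : c != r) (Hj : (j < (m c (par c)).-1)%N) :
  X c (Posz j) ~ S (bl c j).
Proof.
have Hm : (m c (par c) <= Mx)%N by apply: (leq_bigmax c).
have Hjm : (j < Mx.+1)%N by lia.
have Pb : Bpred (c, inord j) by rewrite /Bpred /= Hc inordK.
rewrite /bl (insubT _ Pb) /= /ws /subst_word /= enum_rankK SubK /= inordK // cats0.
exact: ae_refl.
Qed.

Lemma X_r t : X r t ~ [::].
Proof.
rewrite /Xw.
apply: aeT (ae_cancel e m (pw t) (pw (- t)) (r, false)) _.
apply: aeT (pw_add e m r _ _) _; rewrite addrN; exact: ae_refl.
Qed.

Lemma star_all N c : (d c < N)%N -> forall t, X c t ~ S (rho c t).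
Proof.
elim: N c => [|N IH] c // Hc t.
case: (eqVneq c r) => [->|Hcr].
  by rewrite rho_r; exact: X_r.
have [E oK] := mK Hcr.
have /andP[_ Hd] := par_spec Hconn Hcr.
rewrite (rho_c Hcr).
apply: (star oK (par_edge Hcr) E).
  by move=> t'; apply: IH; lia.
by move=> j Hj; apply: bl_basis.
Qed.

Lemma star_all' c t : X c t ~ S (rho c t).
Proof. exact: (@star_all (d c).+1). Qed.

Lemma inv_X c t : inv_word (X c t) = pw (t - 1 + 1) ++ [:: (r, false); (c, true)] ++ pw (- t).
Proof.
rewrite /Xw !inv_word_cat !inv_pw opprK subrK -catA.
by [].
Qed.

Lemma surj w s : pw s ++ w ~ S (phw w s) ++ pw (s + expsum w).
Proof.
elim: w s => [|[v b] w IH] s /=.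
  by rewrite cats0 /expsum big_nil addr0; exact: ae_refl.
rewrite expsum_cons S_cat -catA.
case: b => /=.
  have C : pw s ++ [:: (v, true)] ~ inv_word (X v (s - 1)) ++ pw (s - 1).
    rewrite /Xw !inv_word_cat !inv_pw opprK /= -!catA.
    apply: ae_symm.
    apply: aeT (ae_catl _ (ae_catl _ (pw_add e m r _ _))) _.
    rewrite addNr /= /inv_letter /=.
    rewrite -[[:: (r, false); (v, true)]]/([:: (r, false)] ++ [:: (v, true)]) catA.
    apply: ae_catr; have := pw_succ e m r (s - 1); rewrite subrK; exact: ae_symm.
  rewrite -[(v, _) :: w]cat1s catA; apply: aeT (ae_catr w C) _.
  rewrite -catA; apply: ae_cat.
    rewrite S_inv; apply: ae_inv; exact: star_all'.
  have -> : s + (-1 + expsum w) = s - 1 + expsum w by lia.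
  exact: IH.
have C : pw s ++ [:: (v, false)] ~ X v s ++ pw (s + 1).
  rewrite /Xw -!catA.
  apply: ae_symm.
  apply: aeT (ae_catl _ (ae_catl _ (pw_add e m r _ _))) _.
  have -> : - s + (s + 1) = 1 by lia.
  apply: (aeT (y := (pw s ++ [:: (v, false)]) ++ [::])); last by rewrite cats0; exact: ae_refl.
  rewrite -[[:: (v, false); (r, true)] ++ pw 1]/([:: (v, false)] ++ [:: (r, true); inv_letter (r, true)] ++ [::]) catA.
  exact: ae_cancel.
rewrite -[(v, _) :: w]cat1s catA; apply: aeT (ae_catr w C) _.
rewrite -catA; apply: ae_cat; first exact: star_all'.
have -> : s + (1 + expsum w) = s + 1 + expsum w by lia.
exact: IH.
Qed.

Lemma expsum_nseq (x : V) b n : expsum (nseq n (x, b)) = if b then - (n%:Z) else n%:Z.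
Proof.
elim: n => [|n IH]; first by rewrite /expsum big_nil; case: b.
rewrite /= expsum_cons IH /=; case: (b); lia.
Qed.

Lemma expsum_pw k : expsum (pw k) = k.
Proof.
case: k => n; first by rewrite (_ : pw (Posz n) = nseq n (r, false)) // expsum_nseq.
by rewrite (_ : pw (Negz n) = nseq n.+1 (r, true)) // expsum_nseq NegzE.
Qed.

Lemma expsum_inv (x : word V) : expsum (inv_word x) = - expsum x.
Proof.
elim: x => [|a x IH]; first by rewrite /expsum big_nil.
rewrite inv_word_cons expsum_cat IH !expsum_cons /expsum big_nil.
by case: a => v [] /=; lia.
Qed.

Lemma expsum_X c t : expsum (X c t) = 0.
Proof.
rewrite /Xw !expsum_cat !expsum_pw !expsum_cons /expsum big_nil /=; lia.
Qed.

Lemma phw_rr b n s : phw (nseq n (r, b)) s = [::].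
Proof. by elim: n s => [|n IH] s //=; rewrite IH rho_r; case: (b). Qed.

Lemma phw_pw k s : phw (pw k) s = [::].
Proof. by case: k => n; rewrite /= ?phw_rr ?rho_r. Qed.

Lemma phw_X c t s : phw (X c t) s = rho c (s + t).
Proof.
rewrite /Xw phw_cat phw_pw expsum_pw /= phw_pw rho_r /= !cats0.
by [].
Qed.

Lemma phw_Xinv c t s : phw (inv_word (X c t)) s = inv_word (rho c (s + t)).
Proof.
rewrite /Xw !inv_word_cat !inv_pw opprK !phw_cat phw_pw expsum_pw /= phw_pw rho_r /= !cats0 addrK.
by [].
Qed.

Lemma phw_ws i : phw (ws i) 0 = [:: (i, false)].
Proof.
rewrite /ws phw_X add0r.
have /andP[Hc Hj] := valP (enum_val i).
have [_ oK] := mK Hc.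
rewrite (rho_c Hc) RhoB // /bl.
have -> : ((val (enum_val i)).1, inord (val (val (enum_val i)).2)) = val (enum_val i).
  by rewrite inord_val; case: (val (enum_val i)).
by rewrite valK enum_valK.
Qed.

Lemma phw_wsinv i : phw (inv_word (ws i)) 0 = [:: (i, true)].
Proof. by rewrite /ws phw_Xinv -phw_X -/(ws i) phw_ws. Qed.

Lemma phw_S u : phw (S u) 0 = u.
Proof.
elim: u => [|[i b] u IH] //.
rewrite -cat1s S_cat phw_cat.
have E1 : S [:: (i, b)] = if b then inv_word (ws i) else ws i.
  by rewrite /subst_word /= cats0.
rewrite E1; case: (b).
  by rewrite expsum_inv /ws expsum_X -/(ws i) oppr0 addr0 IH phw_wsinv.
by rewrite /ws expsum_X -/(ws i) addr0 IH phw_ws.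
Qed.

Lemma main_free : K_fg_free e m.
Proof.
exists nB, ws; split.
- by move=> i; rewrite /ws expsum_X.
- move=> u Hu H.
  have := phw_ae H 0; rewrite phw_S /= => E.
  by rewrite -(red_rd (reduced_rd Hu)) E.
- move=> w Hw; exists (phw w 0).
  have := surj w 0; rewrite Hw addr0 /= cats0; exact.
Qed.

End Main.

Close Scope ring_scope.

Theorem proposition6p5 (V : finType) (e : rel V) (m : V -> V -> nat) :
  is_tree e -> artin_labels e m -> even_labels e m -> K_fg_free e m.
Proof.
case=> [[Hsym Hirr] Hcard Hconn Hacyc] Hlab Hev.
case/card_gt0P: Hcard => r _.
exact: (@main_free V e m r Hsym Hirr Hconn Hacyc Hlab Hev).
Qed.
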